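(* Let $G$ be a graph (without multiple edges) on the node set $\{1,\dots,N\}$, where $N=n_1+n_2$ with $n_1,n_2\ge 2$ and $N\ge 4$, and assign to each edge $(i,j)\in G$ a fixed real weight $w_{ij}$ (not depending on the labels). Let the labels $(g_1,\dots,g_N)\in\{0,1\}^N$ be drawn uniformly at random among all binary vectors with exactly $n_1$ zeros and $n_2$ ones (the permutation null distribution), and set $R_1^w=\sum_{(i,j)\in G} w_{ij}\,I(g_i=g_j=0)$, $R_2^w=\sum_{(i,j)\in G} w_{ij}\,I(g_i=g_j=1)$. Let $\mu_k^w=\mathbf{E}(R_k^w)$ and let $\Sigma^w$ be the $2\times 2$ covariance matrix of $(R_1^w,R_2^w)$ under this distribution, assumed invertible, and define $$S_R=(R_1^w-\mu_1^w,\;R_2^w-\mu_2^w)\,(\Sigma^w)^{-1}\begin{pmatrix}R_1^w-\mu_1^w\\ R_2^w-\mu_2^w\end{pmatrix}.$$ Let $p=\frac{n_1-1}{N-2}$, $q=1-p$, and $$Z^R_{\mathrm{diff}}=\frac{(R_1^w-R_2^w)-\mathbf{E}(R_1^w-R_2^w)}{\sqrt{\mathbf{Var}(R_1^w-R_2^w)}},\qquad Z^R_w=\frac{(qR_1^w+pR_2^w)-\mathbf{E}(qR_1^w+pR_2^w)}{\sqrt{\mathbf{Var}(qR_1^w+pR_2^w)}},$$ all moments taken under the permutation null distribution. Then $$S_R=(Z^R_{\mathrm{diff}})^2+(Z^R_w)^2\quad\text{and}\quad \mathbf{Cov}(Z^R_{\mathrm{diff}},Z^R_w)=0 .$$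
   Context: This is the setting of graph-based two-sample tests: the $N$ nodes correspond to the pooled observations of two samples of sizes $n_1$ and $n_2$, $g_i=0$ meaning node $i$ belongs to the first sample and $g_i=1$ to the second. $R_1^w$ and $R_2^w$ are the weighted within-sample edge counts of the first and second samples. Edges are unordered pairs, each counted once in the sums. *)

(* Defs.v *)
From HB Require Import structures.
From mathcomp Require Import all_boot all_order all_algebra.
Unset Printing Implicit Defensive.
Import Order.TTheory GRing.Theory Num.Theory.
Local Open Scope ring_scope.

Section Defs.
Variables (R : rcfType) (n1 n2 : nat).
Local Notation N := (n1 + n2)%N.

(* labelling: g i = false means node i is in sample 1 (g_i = 0),
   g i = true means sample 2 (g_i = 1). *)
Definition labelling := {ffun 'I_N -> bool}.

Definition perm_support : {set labelling} :=
  [set g : labelling | #|[set i | ~~ g i]| == n1].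

Definition Eperm (X : labelling -> R) : R :=
  (\sum_(g in perm_support) X g) / #|perm_support|%:R.

Definition Covperm (X Y : labelling -> R) : R :=
  Eperm (fun g => (X g - Eperm X) * (Y g - Eperm Y)).

Definition Varperm (X : labelling -> R) : R := Covperm X X.

(* weighted within-sample edge counts; the graph is given by a relation e,
   each unordered edge {i,j} (i < j) counted once with weight w i j *)
Definition Rw (e : rel 'I_N) (w : 'I_N -> 'I_N -> R) (b : bool)
  (g : labelling) : R :=
  \sum_(i < N) \sum_(j < N | (i < j)%N && e i j)
     w i j * ((g i == b) && (g j == b))%:R.

Definition R1w e w := Rw e w false.
Definition R2w e w := Rw e w true.

Definition Rvec e w (k : 'I_2) : labelling -> R :=
  if k == ord0 then R1w e w else R2w e w.

Definition Sigmaw e w : 'M[R]_2 :=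
  \matrix_(k, l) Covperm (Rvec e w k) (Rvec e w l).

Definition S_R e w (g : labelling) : R :=
  let d := \row_(k < 2) (Rvec e w k g - Eperm (Rvec e w k)) in
  (d *m invmx (Sigmaw e w) *m d^T) ord0 ord0.

Definition pp : R := (n1 - 1)%:R / (N - 2)%:R.
Definition qq : R := 1 - pp.

Definition standardize (X : labelling -> R) (g : labelling) : R :=
  (X g - Eperm X) / Num.sqrt (Varperm X).

Definition Zdiff e w : labelling -> R :=
  standardize (fun g => R1w e w g - R2w e w g).

Definition Zw e w : labelling -> R :=
  standardize (fun g => qq * R1w e w g + pp * R2w e w g).

End Defs.

(* Main.v *)
Require Import Defs.
From HB Require Import structures.
From mathcomp Require Import all_boot all_order all_algebra.
From mathcomp Require Import zify ring lra.
Import Order.TTheory GRing.Theory Num.Theory.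
Section Count.
Variables (n1 n2 : nat).
Local Notation N := (n1 + n2)%N.
Local Notation T := 'I_N.

Lemma count_sets (S : {set T}) :
  #|[set g in perm_support n1 n2 | [forall x in S, g x]]| =
  #|[set A : {set T} | S \subset A & #|A| == n2]|.
Proof.
pose f (g : labelling n1 n2) : {set T} := [set x | g x].
have finj : injective f.
  by move=> g h /setP E; apply/ffunP => x; have := E x; rewrite !inE.
rewrite -(card_imset _ finj); apply: eq_card => A.
apply/imsetP/idP.
- move=> [g]; rewrite !inE => /andP[Hs /forallP Hf] ->.
  apply/andP; split.
    by apply/subsetP => x xS; rewrite inE; have := Hf x; rewrite xS.
  move: Hs; have -> : [set i | ~~ g i] = ~: f g by apply/setP => x; rewrite !inE.
  move=> /eqP Hs; have := cardsC (f g); rewrite card_ord Hs => H.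
  apply/eqP; lia.
- rewrite inE => /andP[/subsetP SA /eqP cA].
  exists [ffun x => x \in A]; last by apply/setP => x; rewrite !inE ffunE.
  rewrite !inE; apply/andP; split.
    have -> : [set i | ~~ [ffun x => x \in A] i] = ~: A
      by apply/setP => x; rewrite !inE ffunE.
    have := cardsC A; rewrite card_ord cA => H.
    by apply/eqP/(@addnI n2); rewrite H addnC.
  by apply/forall_inP => x xS; rewrite ffunE SA.
Qed.

Lemma count_sets2 (S : {set T}) : (#|S| <= n2)%N ->
  #|[set A : {set T} | S \subset A & #|A| == n2]| = 'C(N - #|S|, n2 - #|S|).
Proof.
move=> Sle.
have -> : (N - #|S| = #|~: S|)%N.
  have := cardsC S; rewrite card_ord => H.
  apply: (@addnI #|S|); rewrite subnKC ?H //.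
  by apply: leq_trans Sle _; apply: leq_addl.
rewrite -cards_draws.
pose h (A : {set T}) := A :\: S.
rewrite -(@card_in_imset _ _ h); last first.
  move=> A B; rewrite !inE => /andP[/subsetP SA _] /andP[/subsetP SB _] E.
  apply/setP => x; move/setP: E => /(_ x); rewrite /h !inE.
  by case xS: (x \in S) => //= _; rewrite SA ?SB.
apply: eq_card => B; apply/imsetP/idP.
- move=> [A]; rewrite !inE => /andP[SA /eqP cA] ->.
  apply/andP; split; first by apply/subsetP => x; rewrite /h !inE => /andP[].
  rewrite /h cardsD cA; have -> : A :&: S = S.
    by apply/setIidPr.
  by [].
- rewrite inE => /andP[/subsetP BS /eqP cB].
  exists (S :|: B).
    rewrite inE subsetUl /= cardsU.
    have -> : S :&: B = set0.
      apply/setP => x; rewrite !inE; apply/negP => /andP[xS xB].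
      by have := BS x xB; rewrite inE xS.
    by rewrite cards0 subn0 cB subnKC.
  apply/setP => x; rewrite /h !inE.
  case xB: (x \in B); rewrite ?andbT.
    by move: (BS x xB); rewrite inE => /negPf ->.
  by case: (x \in S).
Qed.

Lemma count_sets0 (S : {set T}) : (n2 < #|S|)%N ->
  #|[set A : {set T} | S \subset A & #|A| == n2]| = 0%N.
Proof.
move=> lt; apply: eq_card0 => A; rewrite inE; apply/negP => /andP[SA /eqP cA].
by have := subset_leq_card SA; rewrite cA leqNgt lt.
Qed.
End Count.

Local Open Scope ring_scope.

Section Mom.
Variables (R : rcfType) (n1 n2 : nat).
Local Notation N := (n1 + n2)%N.
Local Notation T := 'I_N.
Local Notation lab := (labelling n1 n2).
Local Notation supp := (perm_support n1 n2).
Local Notation E := (Eperm R n1 n2).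
Local Notation Cov := (Covperm R n1 n2).

Definition cnat k := if (k <= n2)%N then 'C(N - k, n2 - k) else 0%N.

Lemma count_c (S : {set T}) :
  #|[set g in supp | [forall x in S, g x]]| = cnat #|S|.
Proof.
rewrite count_sets /cnat; case: leqP => H.
  by rewrite count_sets2.
by rewrite count_sets0.
Qed.

Lemma supp_card : #|supp| = cnat 0.
Proof.
rewrite -(cards0 T) -count_c; apply: eq_card => g; rewrite !inE.
by case: (_ == _) => //=; apply/esym/forall_inP => x; rewrite inE.
Qed.

Lemma cnat0_gt0 : (0 < cnat 0)%N.
Proof. by rewrite /cnat leq0n !subn0 bin_gt0 leq_addl. Qed.

Lemma cnat_rec k : (k <= n2)%N -> (cnat k.+1 * (N - k) = cnat k * (n2 - k))%N.
Proof.
move=> kle; rewrite /cnat kle; case: leqP => H; last first.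
  have := mul_bin_diag (N - k) (n2 - k.+1).
  have -> : ((n2 - k.+1).+1 = n2 - k)%N by lia.
  have -> : ((N - k).-1 = N - k.+1)%N by rewrite -subn1 -subnDA addn1.
  by rewrite mulnC => ->; rewrite mulnC.
have -> : (n2 - k = 0)%N by lia.
by rewrite muln0 mul0n.
Qed.

Lemma sum_bool (P : pred lab) :
  \sum_(g in supp) ((P g)%:R : R) = (#|[set g in supp | P g]|)%:R.
Proof.
rewrite -natr_sum; congr (_ %:R).
rewrite -sum1_card [RHS](eq_bigl (fun g => (g \in supp) && P g)); last first.
  by move=> g; rewrite inE.
rewrite [RHS]big_mkcondr /=; apply: eq_bigr => g _; by case: (P g).
Qed.

Lemma Mne0 : (#|supp|%:R : R) != 0.
Proof. by rewrite supp_card pnatr_eq0 -lt0n cnat0_gt0. Qed.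
End Mom.

Section ECov.
Variables (R : rcfType) (n1 n2 : nat).
Local Notation N := (n1 + n2)%N.
Local Notation lab := (labelling n1 n2).
Local Notation supp := (perm_support n1 n2).
Local Notation E := (Eperm R n1 n2).
Local Notation Cov := (Covperm R n1 n2).
Let Mne0 := Mne0 R n1 n2.

Lemma E_ext (X Y : lab -> R) : (forall g, g \in supp -> X g = Y g) -> E X = E Y.
Proof. by move=> H; rewrite /Eperm; congr (_ / _); apply: eq_bigr. Qed.

Lemma E_add (X Y : lab -> R) : E (fun g => X g + Y g) = E X + E Y.
Proof. by rewrite /Eperm big_split mulrDl. Qed.

Lemma E_scale a (X : lab -> R) : E (fun g => a * X g) = a * E X.
Proof. by rewrite /Eperm -mulr_sumr mulrA. Qed.

Lemma E_const a : E (fun _ => a) = a.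
Proof. by rewrite /Eperm sumr_const -[a *+ _]mulr_natr mulfK. Qed.

Lemma E_sum (I : Type) (r : seq I) (P : pred I) (F : I -> lab -> R) :
  E (fun g => \sum_(k <- r | P k) F k g) = \sum_(k <- r | P k) E (F k).
Proof. by rewrite /Eperm exchange_big /= mulr_suml. Qed.

Lemma Cov_E (X Y : lab -> R) : Cov X Y = E (fun g => X g * Y g) - E X * E Y.
Proof.
rewrite /Covperm.
rewrite (@E_ext _ (fun g => (X g * Y g + (- E Y) * X g) + ((- E X) * Y g + E X * E Y))); last first.
  by move=> g _ /=; ring.
rewrite !E_add (E_const (E X * E Y)) !E_scale; ring.
Qed.

Lemma Cov_sym (X Y : lab -> R) : Cov X Y = Cov Y X.
Proof. by rewrite !Cov_E mulrC; congr (_ - _); apply: E_ext => g _; rewrite mulrC. Qed.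

Lemma Cov_extL (X X' Y : lab -> R) : (forall g, g \in supp -> X g = X' g) ->
  Cov X Y = Cov X' Y.
Proof.
move=> H; rewrite !Cov_E (@E_ext X X' H); congr (_ - _).
by apply: E_ext => g gs; rewrite H.
Qed.

Lemma Cov_addL (X X' Y : lab -> R) :
  Cov (fun g => X g + X' g) Y = Cov X Y + Cov X' Y.
Proof.
rewrite !Cov_E E_add.
rewrite (@E_ext _ (fun g => X g * Y g + X' g * Y g)); last by move=> g _ /=; ring.
rewrite E_add; ring.
Qed.

Lemma Cov_scaleL a (X Y : lab -> R) : Cov (fun g => a * X g) Y = a * Cov X Y.
Proof.
rewrite !Cov_E E_scale.
rewrite (@E_ext _ (fun g => a * (X g * Y g))); last by move=> g _ /=; ring.
rewrite E_scale; ring.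
Qed.

Lemma Cov_constL a (Y : lab -> R) : Cov (fun _ => a) Y = 0.
Proof.
rewrite Cov_E (E_const a).
by rewrite E_scale subrr. Qed.

Lemma Cov_sumL (I : Type) (r : seq I) (P : pred I) (F : I -> lab -> R) Y :
  Cov (fun g => \sum_(k <- r | P k) F k g) Y = \sum_(k <- r | P k) Cov (F k) Y.
Proof.
rewrite Cov_E E_sum.
rewrite (@E_ext _ (fun g => \sum_(k <- r | P k) F k g * Y g)); last first.
  by move=> g _; rewrite mulr_suml.
rewrite E_sum mulr_suml -sumrB; apply: eq_bigr => k _; by rewrite Cov_E.
Qed.

Lemma Var_ge0 (X : lab -> R) : 0 <= Varperm R n1 n2 X.
Proof.
rewrite /Varperm /Covperm /Eperm; apply: divr_ge0; last exact: ler0n.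
by apply: sumr_ge0 => g _; rewrite -expr2 sqr_ge0.
Qed.

End ECov.

Section Mom2.
Variables (R : rcfType) (n1 n2 : nat).
Local Notation N := (n1 + n2)%N.
Local Notation T := 'I_N.
Local Notation lab := (labelling n1 n2).
Local Notation supp := (perm_support n1 n2).
Local Notation E := (Eperm R n1 n2).
Local Notation Cov := (Covperm R n1 n2).
Local Notation cnat := (cnat n1 n2).
Definition xx (i : T) (g : lab) : R := (g i)%:R.


Lemma E_forall (S : {set T}) :
  E (fun g => ([forall x in S, g x] : nat)%:R) = (cnat #|S|)%:R / (cnat 0)%:R.
Proof. by rewrite /Eperm sum_bool count_c supp_card. Qed.

Lemma forall1 (g : lab) i : [forall x in [set i], g x] = g i.
Proof.
apply/forall_inP/idP => [H|gi x]; first by apply: H; rewrite inE.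
by rewrite inE => /eqP ->.
Qed.

Lemma forall2 (g : lab) i j : [forall x in [set i; j], g x] = g i && g j.
Proof.
apply/forall_inP/andP => [H|[gi gj] x]; first by split; apply: H; rewrite !inE eqxx ?orbT.
by rewrite !inE => /orP[] /eqP ->.
Qed.

Lemma forall3 (g : lab) i j m : [forall x in [set i; j; m], g x] = [&& g i, g j & g m].
Proof.
apply/forall_inP/and3P => [H|[gi gj gm] x]; first by split; apply: H; rewrite !inE eqxx ?orbT.
by rewrite !inE => /orP[/orP[]|] /eqP ->.
Qed.

Lemma E_x1 i : E (xx i) = (cnat 1)%:R / (cnat 0)%:R.
Proof.
rewrite -(cards1 i) -E_forall; apply: E_ext => g _.
by rewrite forall1.
Qed.

Lemma E_x2 i j : E (fun g => xx i g * xx j g) = (cnat #|[set i; j]|)%:R / (cnat 0)%:R.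
Proof.
rewrite -E_forall; apply: E_ext => g _.
rewrite forall2 /xx; case: (g i); case: (g j); by rewrite /= ?mulr1n ?mulr0n ?mulr1 ?mulr0.
Qed.

Lemma E_x3 i j m : E (fun g => xx i g * xx j g * xx m g) =
  (cnat #|[set i; j; m]|)%:R / (cnat 0)%:R.
Proof.
rewrite -E_forall; apply: E_ext => g _.
rewrite forall3 /xx; case: (g i); case: (g j); case: (g m);
  by rewrite /= ?mulr1n ?mulr0n ?mulr1 ?mulr0.
Qed.

End Mom2.

Section Key.
Variables (R : rcfType) (n1 n2 : nat).
Local Notation N := (n1 + n2)%N.
Local Notation T := 'I_N.
Local Notation lab := (labelling n1 n2).
Local Notation supp := (perm_support n1 n2).
Local Notation E := (Eperm R n1 n2).
Local Notation Cov := (Covperm R n1 n2).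
Local Notation xx := (xx R n1 n2).
Local Notation cnat := (cnat n1 n2).
Hypotheses (h1 : (2 <= n1)%N) (h2 : (2 <= n2)%N) (h4 : (4 <= N)%N).

Lemma key3 i j m : i != j ->
  Cov (fun g => xx i g * xx j g) (xx m) =
  qq R n1 n2 * (Cov (xx i) (xx m) + Cov (xx j) (xx m)).
Proof.
move=> ij.
have M0 := Mne0 R n1 n2.
rewrite !Cov_E // E_x3 !E_x2 !E_x1.
have r0 := @cnat_rec n1 n2 0 (leq0n n2).
have r1 := @cnat_rec n1 n2 1 (ltnW h2).
have r2 := @cnat_rec n1 n2 2 h2.
move: r0 r1 r2 => /(congr1 (fun n => n%:R : R)) r0 /(congr1 (fun n => n%:R : R)) r1
  /(congr1 (fun n => n%:R : R)) r2.
rewrite !natrM !natrB //= ?natrD in r0 r1 r2; try lia.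
have C0 : (cnat 0)%:R != 0 :> R by rewrite pnatr_eq0 -lt0n cnat0_gt0.
have ha : (2 <= n1%:R :> R) by rewrite (ler_nat R 2 n1).
have hb : (2 <= n2%:R :> R) by rewrite (ler_nat R 2 n2).
have hab : (4 <= n1%:R + n2%:R :> R) by rewrite -natrD (ler_nat R 4).
have d0 : n1%:R + n2%:R != 0 :> R by rewrite gt_eqF //; lra.
have d1 : n1%:R + n2%:R - 1 != 0 :> R by rewrite gt_eqF //; lra.
have d2 : n1%:R + n2%:R - 2 != 0 :> R by rewrite gt_eqF //; lra.
rewrite !subr0 in r0.
have e1 : (cnat 1)%:R = (cnat 0)%:R * n2%:R / (n1%:R + n2%:R) :> R by rewrite -r0 mulfK.
have e2 : (cnat 2)%:R = (cnat 1)%:R * (n2%:R - 1) / (n1%:R + n2%:R - 1) :> R by rewrite -r1 mulfK.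
have e3 : (cnat 3)%:R = (cnat 2)%:R * (n2%:R - 2) / (n1%:R + n2%:R - 2) :> R by rewrite -r2 mulfK.
rewrite /qq /pp !natrB ?natrD //; try lia.
rewrite cards2 ij.
have c3 : forall a b c : T, #|[set a; b; c]| = ((a \notin [set b; c]) + (b != c).+1)%N.
  move=> a b c; have -> : [set a; b; c] = a |: [set b; c] by apply/setP => x; rewrite !inE orbA.
  by rewrite cardsU1 cards2.
rewrite c3 !cards2 !inE.
have ji : (j == i) = false by rewrite eq_sym (negbTE ij).
have ij' : (i == j) = false by rewrite (negbTE ij).
case: (eqVneq m i) => [->|mi].
  rewrite ij' ji /=.
  rewrite e2 e1; field.
  by rewrite C0 d0 d1 d2.
case: (eqVneq m j) => [mj|mj].
  rewrite ij' /=.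
  rewrite e2 e1; field.
  by rewrite C0 d0 d1 d2.
rewrite ij' /=.
rewrite e3 e2 e1; field.
by rewrite C0 d0 d1 d2.
Qed.
End Key.

Section Main.
Variables (R : rcfType) (n1 n2 : nat).
Local Notation N := (n1 + n2)%N.
Local Notation T := 'I_N.
Local Notation lab := (labelling n1 n2).
Local Notation supp := (perm_support n1 n2).
Local Notation E := (Eperm R n1 n2).
Local Notation Cov := (Covperm R n1 n2).
Local Notation xx := (xx R n1 n2).
Variables (e : rel T) (w : T -> T -> R).
Hypotheses (h1 : (2 <= n1)%N) (h2 : (2 <= n2)%N) (h4 : (4 <= N)%N).

Definition DS (F : T -> T -> R) : R :=
  \sum_(i < N) \sum_(j < N | (i < j)%N && e i j) F i j.

Lemma DS_ext F G : (forall i j, F i j = G i j) -> DS F = DS G.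
Proof. by move=> H; apply: eq_bigr => i _; apply: eq_bigr => j _. Qed.

Lemma DS_add F G : DS F + DS G = DS (fun i j => F i j + G i j).
Proof. by rewrite /DS -big_split; apply: eq_bigr => i _; rewrite -big_split. Qed.

Lemma DS_sub F G : DS F - DS G = DS (fun i j => F i j - G i j).
Proof. by rewrite /DS -sumrB; apply: eq_bigr => i _; rewrite -sumrB. Qed.

Lemma DS_scale a F : a * DS F = DS (fun i j => a * F i j).
Proof. by rewrite /DS mulr_sumr; apply: eq_bigr => i _; rewrite mulr_sumr. Qed.

Lemma Cov_DSL (F : T -> T -> lab -> R) Y :
  Cov (fun g => DS (fun i j => F i j g)) Y = DS (fun i j => Cov (F i j) Y).
Proof.
rewrite /DS Cov_sumL; apply: eq_bigr => i _; by rewrite Cov_sumL.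
Qed.

Definition Lf (g : lab) := DS (fun i j => w i j * (xx i g + xx j g)).
Definition Qf (g : lab) := DS (fun i j => w i j * (xx i g * xx j g)).

Lemma Cov_L Y : Cov Lf Y = DS (fun i j => w i j * (Cov (xx i) Y + Cov (xx j) Y)).
Proof.
rewrite /Lf Cov_DSL; apply: DS_ext => i j.
by rewrite Cov_scaleL Cov_addL.
Qed.

Lemma Cov_Q Y : Cov Qf Y = DS (fun i j => w i j * Cov (fun g => xx i g * xx j g) Y).
Proof.
rewrite /Qf Cov_DSL; apply: DS_ext => i j.
by rewrite Cov_scaleL.
Qed.

Lemma Cov_xQ m : Cov (xx m) Qf = qq R n1 n2 * Cov (xx m) Lf.
Proof.
rewrite Cov_sym Cov_Q (@Cov_sym _ _ _ (xx m)) Cov_L /DS mulr_sumr.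
apply: eq_bigr => i _; rewrite mulr_sumr; apply: eq_bigr => j /andP[ij _].
have nij : i != j by apply: contraTneq ij => ->; rewrite ltnn.
rewrite key3 //; ring.
Qed.

Lemma Cov_LQ : Cov Lf Qf = qq R n1 n2 * Cov Lf Lf.
Proof.
rewrite Cov_L (Cov_L Lf) DS_scale; apply: DS_ext => i j.
rewrite !Cov_xQ; ring.
Qed.

Lemma Rw_DS b g : Rw R n1 n2 e w b g =
  DS (fun i j => w i j * ((g i == b) && (g j == b) : nat)%:R).
Proof. by []. Qed.

Lemma X_pt g : R1w R n1 n2 e w g - R2w R n1 n2 e w g = DS w + (-1) * Lf g.
Proof.
rewrite /R1w /R2w !Rw_DS /Lf DS_scale DS_sub DS_add; apply: DS_ext => i j.
by rewrite /xx; case: (g i); case: (g j); rewrite /= ?mulr1n ?mulr0n; ring.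
Qed.

Lemma Y_pt g : qq R n1 n2 * R1w R n1 n2 e w g + pp R n1 n2 * R2w R n1 n2 e w g =
  qq R n1 n2 * DS w + ((- qq R n1 n2) * Lf g + Qf g).
Proof.
rewrite /R1w /R2w !Rw_DS /Lf /Qf !DS_scale !DS_add; apply: DS_ext => i j.
by rewrite /qq /xx; case: (g i); case: (g j); rewrite /= ?mulr1n ?mulr0n; ring.
Qed.

Lemma cov0 : Cov (fun g => R1w R n1 n2 e w g - R2w R n1 n2 e w g)
  (fun g => qq R n1 n2 * R1w R n1 n2 e w g + pp R n1 n2 * R2w R n1 n2 e w g) = 0.
Proof.
rewrite (@Cov_extL _ _ _ _ (fun g => DS w + (-1) * Lf g)); last by move=> g _; rewrite X_pt.
rewrite Cov_addL Cov_constL Cov_scaleL add0r.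
rewrite Cov_sym (@Cov_extL _ _ _ _ (fun g => qq R n1 n2 * DS w + ((- qq R n1 n2) * Lf g + Qf g))); last first.
  by move=> g _; rewrite Y_pt.
rewrite Cov_addL Cov_constL Cov_addL Cov_scaleL add0r (@Cov_sym _ _ _ Qf) Cov_LQ; ring.
Qed.

End Main.

Lemma Cov_ext2 (R : rcfType) n1 n2 (X X' Y Y' : labelling n1 n2 -> R) :
  (forall g, g \in perm_support n1 n2 -> X g = X' g) ->
  (forall g, g \in perm_support n1 n2 -> Y g = Y' g) ->
  Covperm R n1 n2 X Y = Covperm R n1 n2 X' Y'.
Proof.
move=> HX HY; rewrite (Cov_extL _ _ _ _ _ _ HX) Cov_sym (Cov_extL _ _ _ _ _ _ HY) Cov_sym //.
Qed.

Lemma Cov_bil (R : rcfType) n1 n2 (U V : labelling n1 n2 -> R) al be ga de :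
  Covperm R n1 n2 (fun g => al * U g + be * V g) (fun g => ga * U g + de * V g) =
  al * ga * Covperm R n1 n2 U U + al * de * Covperm R n1 n2 U V +
  be * ga * Covperm R n1 n2 V U + be * de * Covperm R n1 n2 V V.
Proof.
rewrite Cov_addL !Cov_scaleL Cov_sym Cov_addL !Cov_scaleL.
rewrite (Cov_sym _ _ _ _ (fun g => ga * U g + de * V g)) Cov_addL !Cov_scaleL.
rewrite ?(Cov_sym _ _ _ V U); ring.
Qed.

Lemma rowker (R : fieldType) (A : 'M[R]_2) (r : 'rV[R]_2) :
  A \in unitmx -> r *m A = 0 -> r = 0.
Proof.
move=> uA H; by rewrite -[r]mulmx1 -(mulmxV uA) mulmxA H mul0mx.
Qed.

Lemma ord2_cases (l : 'I_2) : l = ord0 \/ l = ord_max.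
Proof. by case: l => [[|[|//]]] Hl; [left|right]; apply: val_inj. Qed.

Lemma mul_row2 (R : fieldType) m n (A : 'M[R]_(2, n)) (r : 'M[R]_(m, 2)) i l :
  (r *m A) i l = r i 0 * A 0 l + r i ord_max * A ord_max l.
Proof.
rewrite mxE !big_ord_recl big_ord0 addr0.
by congr (_ + _ * _); congr (_ _ _); apply: val_inj.
Qed.

Definition M2 {R : fieldType} (x y z t : R) : 'M[R]_2 :=
  \matrix_(k, l) (if k == ord0 then (if l == ord0 then x else y)
                  else (if l == ord0 then z else t)).

Definition V2 {R : fieldType} (x y : R) : 'rV[R]_2 :=
  \row_k (if k == ord0 then x else y).

Lemma M2E (R : fieldType) (x y z t : R) :
  [/\ M2 x y z t 0 0 = x, M2 x y z t 0 ord_max = y,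
      M2 x y z t ord_max 0 = z & M2 x y z t ord_max ord_max = t].
Proof. by rewrite !mxE. Qed.

Lemma V2E (R : fieldType) (x y : R) : V2 x y 0 0 = x /\ V2 x y 0 ord_max = y.
Proof. by rewrite !mxE. Qed.

Lemma matrix_part (R : fieldType) (s11 s12 s22 p d0 d1 a b : R) :
  M2 s11 s12 s12 s22 \in unitmx ->
  (1-p) * s11 + (p - (1-p)) * s12 - p * s22 = 0 ->
  a = s11 - 2 * s12 + s22 ->
  b = (1-p)^+2 * s11 + 2 * p * (1-p) * s12 + p^+2 * s22 ->
  [/\ a != 0, b != 0 &
   (V2 d0 d1 *m invmx (M2 s11 s12 s12 s22) *m (V2 d0 d1)^T) 0 0
     = (d0 - d1)^+2 / a + ((1-p) * d0 + p * d1)^+2 / b].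
Proof.
move=> uS hc ha hb.
have e12 : s12 = b - p*(1-p)*a.
  have : s12 = b - p*(1-p)*a + (p - (1-p)) * ((1-p) * s11 + (p - (1-p)) * s12 - p * s22).
    by rewrite ha hb; ring.
  by rewrite hc mulr0 addr0.
have e11 : s11 = b - p*(1-p)*a + p * a.
  have : s11 = b - p*(1-p)*a + p * a + (1 + p - (1-p)) * ((1-p) * s11 + (p - (1-p)) * s12 - p * s22).
    by rewrite ha hb; ring.
  by rewrite hc mulr0 addr0.
have e22 : s22 = b - p*(1-p)*a + (1-p) * a.
  have : s22 = b - p*(1-p)*a + (1-p) * a + (p - (1-p) - 1) * ((1-p) * s11 + (p - (1-p)) * s12 - p * s22).
    by rewrite ha hb; ring.
  by rewrite hc mulr0 addr0.
have a0 : a != 0.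
  apply/eqP => a0.
  have : V2 1 (-1) = 0 :> 'rV[R]_2.
    apply: (@rowker _ _ _ uS); apply/rowP => l; rewrite mul_row2 !mxE.
    case: (ord2_cases l) => ->; rewrite /= ?e11 ?e12 ?e22 a0; ring.
  move/rowP => /(_ 0); rewrite !mxE /=; apply/eqP; exact: oner_neq0.
have b0 : b != 0.
  apply/eqP => b0.
  have : V2 (1-p) p = 0 :> 'rV[R]_2.
    apply: (@rowker _ _ _ uS); apply/rowP => l; rewrite mul_row2 !mxE.
    case: (ord2_cases l) => ->; rewrite /= ?e11 ?e12 ?e22 b0; ring.
  move/rowP => H; have := H 0; have := H ord_max; rewrite !mxE /= => ->.
  by rewrite subr0 => /eqP; rewrite oner_eq0.
split => //.
pose K := M2 (1/a + (1-p)^+2/b) (-1/a + (1-p) * p/b) (-1/a + (1-p) * p/b) (1/a + p^+2/b).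
have KS : K *m M2 s11 s12 s12 s22 = 1%:M.
  apply/matrixP => k l; rewrite mul_row2 !mxE.
  case: (ord2_cases k) => ->; case: (ord2_cases l) => -> /=;
    rewrite ?e11 ?e12 ?e22; field; by rewrite a0 b0.
have -> : invmx (M2 s11 s12 s12 s22) = K.
  by rewrite -[invmx _]mulmx1 -(mulmx1C KS) mulmxA mulVmx // mul1mx.
rewrite mul_row2 !mul_row2 !mxE /=.
field; by rewrite a0 b0.
Qed.

Theorem theorem1 (R : rcfType) (n1 n2 : nat)
  (e : rel 'I_(n1 + n2)) (w : 'I_(n1 + n2) -> 'I_(n1 + n2) -> R) :
  (2 <= n1)%N -> (2 <= n2)%N -> (4 <= n1 + n2)%N ->
  irreflexive e -> symmetric e ->
  Sigmaw R n1 n2 e w \in unitmx ->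
  (forall g, g \in perm_support n1 n2 ->
     S_R R n1 n2 e w g
       = Zdiff R n1 n2 e w g ^+ 2 + Zw R n1 n2 e w g ^+ 2) /\
  Covperm R n1 n2 (Zdiff R n1 n2 e w) (Zw R n1 n2 e w) = 0.
Proof.
move=> h1 h2 h4 _ _ uS.
have c0 := @cov0 R n1 n2 e w h1 h2 h4.
rewrite /Zdiff /Zw /S_R /standardize /Varperm.
move: uS c0; rewrite /Sigmaw /Rvec.
set R1 := R1w R n1 n2 e w; set R2 := R2w R n1 n2 e w.
set p := pp R n1 n2; set q := qq R n1 n2.
move=> uS c0.
have hq : q = 1 - p by [].
have Sig : \matrix_(k, l) Covperm R n1 n2 (if k == ord0 then R1 else R2)
                     (if l == ord0 then R1 else R2) =
   M2 (Covperm R n1 n2 R1 R1) (Covperm R n1 n2 R1 R2) (Covperm R n1 n2 R1 R2)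
      (Covperm R n1 n2 R2 R2).
  apply/matrixP => k l; rewrite !mxE.
  by case: (ord2_cases k) => ->; case: (ord2_cases l) => -> //=; rewrite Cov_sym.
have Dv g : \row_k ((if k == ord0 then R1 else R2) g -
            Eperm R n1 n2 (if k == ord0 then R1 else R2)) =
   V2 (R1 g - Eperm R n1 n2 R1) (R2 g - Eperm R n1 n2 R2).
  by apply/rowP => k; rewrite !mxE; case: (ord2_cases k) => ->.
have XE : forall g, g \in perm_support n1 n2 -> R1 g - R2 g = 1 * R1 g + (-1) * R2 g.
  by move=> g _; ring.
have YE : forall g, g \in perm_support n1 n2 -> q * R1 g + p * R2 g = q * R1 g + p * R2 g.
  by [].
have cE : (1-p) * Covperm R n1 n2 R1 R1 + (p - (1-p)) * Covperm R n1 n2 R1 R2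
          - p * Covperm R n1 n2 R2 R2 = 0.
  rewrite -c0 (Cov_ext2 _ _ _ _ _ _ _ XE YE) Cov_bil (Cov_sym _ _ _ R2 R1) hq; ring.
have aE : Covperm R n1 n2 (fun g => R1 g - R2 g) (fun g => R1 g - R2 g) =
   Covperm R n1 n2 R1 R1 - 2 * Covperm R n1 n2 R1 R2 + Covperm R n1 n2 R2 R2.
  rewrite (Cov_ext2 _ _ _ _ _ _ _ XE XE) Cov_bil (Cov_sym _ _ _ R2 R1); ring.
have bE : Covperm R n1 n2 (fun g => q * R1 g + p * R2 g) (fun g => q * R1 g + p * R2 g) =
   (1-p)^+2 * Covperm R n1 n2 R1 R1 + 2 * p * (1-p) * Covperm R n1 n2 R1 R2
   + p^+2 * Covperm R n1 n2 R2 R2.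
  rewrite Cov_bil (Cov_sym _ _ _ R2 R1) hq; ring.
rewrite Sig in uS.
have EX : Eperm R n1 n2 (fun g => R1 g - R2 g) = Eperm R n1 n2 R1 - Eperm R n1 n2 R2.
  rewrite (@E_ext _ _ _ _ (fun g => R1 g + (-1) * R2 g)); last by move=> g _; ring.
  rewrite E_add E_scale; ring.
have EY : Eperm R n1 n2 (fun g => q * R1 g + p * R2 g) =
   q * Eperm R n1 n2 R1 + p * Eperm R n1 n2 R2.
  by rewrite E_add !E_scale.
have vX := Var_ge0 R n1 n2 (fun g => R1 g - R2 g).
have vY := Var_ge0 R n1 n2 (fun g => q * R1 g + p * R2 g).
rewrite /Varperm in vX vY.
split.
  move=> g _; rewrite Sig Dv.
  have [a0 b0 ->] := @matrix_part _ _ _ _ _ (R1 g - Eperm R n1 n2 R1) (R2 g - Eperm R n1 n2 R2) _ _ uS cE aE bE.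
  rewrite !expr_div_n !sqr_sqrtr // EX EY hq; field.
  by rewrite a0 b0.
set sX := Num.sqrt _; set sY := Num.sqrt _.
rewrite (@Cov_ext2 _ _ _ _
  (fun g => (- Eperm R n1 n2 (fun g0 => R1 g0 - R2 g0) / sX) + sX^-1 * (R1 g - R2 g)) _
  (fun g => (- Eperm R n1 n2 (fun g0 => q * R1 g0 + p * R2 g0) / sY) + sY^-1 * (q * R1 g + p * R2 g)));
  try by move=> g _; ring.
rewrite Cov_addL Cov_constL Cov_scaleL add0r Cov_sym Cov_addL Cov_constL Cov_scaleL add0r.
by rewrite Cov_sym c0 !mulr0.
Qed.
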